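(* Given a finite set of types $T$ and a positive integer $n$, it holds that $\mathrm{PoA}(\mathcal{G}_T^n)=\mathrm{GPoA}(\mathcal{G}_T^n)$. Furthermore, there exists an $n$-player game $G\in\mathcal{G}_T^n$ with $|\mathcal{R}|\le 2n$ resources and $\mathrm{PoA}(G)=\mathrm{GPoA}(\mathcal{G}_T^n)$.
   Context: Fix a positive integer $n$ and a finite set of resource types $T=\{(c_1,f_1),\dots,(c_m,f_m)\}$, where $c_t,f_t:\{1,\dots,n\}\to\mathbb{R}$, with the convention $c_t(0)=0$. The class $\mathcal{G}_T^n$ consists of all local resource allocation games $G$ of the following form: agent set $N=\{1,\dots,n\}$; a finite set of resources $\mathcal{R}$; for each $r\in\mathcal{R}$ a value $v_r\ge0$ and a type $(c,f)\in T$, giving $c_r=v_r c$ and $f_r=v_r f$; for each agent $i$ an action set $\mathcal{A}_i\subseteq 2^{\mathcal{R}}$, with $\mathcal{A}=\mathcal{A}_1\times\dots\times\mathcal{A}_n$. For $a\in\mathcal{A}$, $|a|_r$ is the number of agents $i$ with $r\in a_i$; the system cost is $C(a)=\sum_{r\in\mathcal{R}}c_r(|a|_r)$ and the local cost of agent $i$ is $J_i(a)=\sum_{r\in a_i}f_r(|a|_r)$. A Nash equilibrium is $a^{ne}\in\mathcal{A}$ with $J_i(a^{ne})\le J_i(a_i,a^{ne}_{-i})$ for all $a_i\in\mathcal{A}_i$, $i\in N$; $\mathrm{PoA}(G)=\max_{a\in\mathrm{NE}(G)}C(a)/\min_{a\in\mathcal{A}}C(a)$, and $\mathrm{PoA}(\mathcal{G}_T^n)=\sup_{G\in\mathcal{G}_T^n}\mathrm{PoA}(G)$.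 The generalized price-of-anarchy of the class is $\mathrm{GPoA}(\mathcal{G}_T^n)=\inf\{\lambda/(1-\mu):\lambda>0,\mu<1\}$ over those $(\lambda,\mu)$ such that for every $G\in\mathcal{G}_T^n$ and all $a,a'\in\mathcal{A}$: $\sum_{i=1}^nJ_i(a'_i,a_{-i})-\sum_{i=1}^nJ_i(a)+C(a)\le\lambda C(a')+\mu C(a)$. *)

(* Defs.v *)
From HB Require Import structures.
From mathcomp Require Import all_boot all_order all_algebra.
From mathcomp Require Import classical_sets reals constructive_ereal ereal.
Set Implicit Arguments. Unset Strict Implicit. Unset Printing Implicit Defensive.
Import Order.TTheory GRing.Theory Num.Theory.
Local Open Scope ring_scope.
Local Open Scope classical_set_scope.

(* R   : the real numbers (any realType),
   n   : number of agents (agents are 'I_n),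
   Ty  : finite index type of the resource types T = {(c t, f t) | t : Ty},
   c f : Ty -> nat -> R, the system-cost / local-cost functions of each type
         (only their values on 0..n matter; c t 0 = 0 is a hypothesis).   *)

Record game (R : realType) (n : nat) (Ty : finType) (Res : finType) := Game {
  gval : Res -> R;
  gty  : Res -> Ty;
  gact : 'I_n -> {set {set Res}}
}.

Definition valid_game R n Ty Res (G : @game R n Ty Res) : Prop :=
  (forall r, 0 <= gval G r) /\ (forall i, gact G i != finset.set0).

Section Game.
Variables (R : realType) (n : nat) (Ty : finType) (c f : Ty -> nat -> R).
Variables (Res : finType) (G : @game R n Ty Res).

Definition profile := 'I_n -> {set Res}.

Definition feasible (a : profile) : Prop := forall i, a i \in gact G i.

Definition load (a : profile) (r : Res) : nat := #|[set i : 'I_n | r \in a i]|.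

Definition syscost (a : profile) : R :=
  \sum_(r : Res) gval G r * c (gty G r) (load a r).

Definition loccost (i : 'I_n) (a : profile) : R :=
  \sum_(r in a i) gval G r * f (gty G r) (load a r).

Definition upd (a : profile) (i : 'I_n) (ai : {set Res}) : profile :=
  fun j => if j == i then ai else a j.

Definition is_NE (a : profile) : Prop :=
  feasible a /\
  forall i ai, ai \in gact G i -> loccost i a <= loccost i (upd a i ai).

Definition is_opt (a : profile) : Prop :=
  feasible a /\ forall b, feasible b -> syscost a <= syscost b.

(* the optimal (minimal) system cost is positive, so PoA(G) is a
   well-defined ratio *)
Definition pos_opt : Prop := forall a, is_opt a -> 0 < syscost a.

Definition gamePoA : \bar R :=
  ereal_sup [set x | exists ne op, is_NE ne /\ is_opt op /\
                                x = (syscost ne / syscost op)%:E].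

End Game.

Section Class.
Variables (R : realType) (n : nat) (Ty : finType) (c f : Ty -> nat -> R).

Definition classPoA : \bar R :=
  ereal_sup [set x | exists (Res : finType) (G : @game R n Ty Res),
     valid_game G /\ pos_opt c G /\ x = gamePoA c f G].

Definition gpoa_feasible (lam mu : R) : Prop :=
  0 < lam /\ mu < 1 /\
  forall (Res : finType) (G : @game R n Ty Res), valid_game G ->
  forall a a' : profile n Res, feasible G a -> feasible G a' ->
    \sum_(i < n) loccost f G i (upd a i (a' i)) - \sum_(i < n) loccost f G i a
      + syscost c G a <= lam * syscost c G a' + mu * syscost c G a.

(* GPoA(G_T^n) = inf { lambda / (1 - mu) } (= +oo if no feasible pair) *)
Definition classGPoA : \bar R :=
  ereal_inf [set x | exists lam mu, gpoa_feasible lam mu /\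
                                x = (lam / (1 - mu))%:E].
End Class.

(* Main.v *)
Require Import Defs.
From HB Require Import structures.
From mathcomp Require Import all_boot all_order all_algebra.
From mathcomp Require Import boolp classical_sets reals constructive_ereal ereal.
Import Order.TTheory GRing.Theory Num.Theory.
From mathcomp Require Import ring lra.
Local Open Scope ring_scope.
Set Implicit Arguments. Unset Strict Implicit. Unset Printing Implicit Defensive.

Lemma sum_cond_const (R : realType) (I : finType) (P : pred I) (x : R) :
  \sum_(i | P i) x = x *+ #|[set i | P i]|.
Proof. by rewrite -sumr_const; apply: eq_bigl => i; rewrite inE. Qed.

Lemma card_split (I : finType) (P Q : pred I) :
  #|[set i | P i]| = (#|[set i | P i && Q i]| + #|[set i | P i && ~~ Q i]|)%N.
Proof. by rewrite -!sum1dep_card (bigID Q). Qed.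

Lemma loadE n (Res : finType) (a : profile n Res) r :
  load a r = #|[set i | r \in a i]|.
Proof.
rewrite /load; apply: eq_card => i.
rewrite inE; apply/idP/idP => [/set_mem //|H]; exact: mem_set.
Qed.

Definition gam0 (R : realType) (Ty : finType) (f : Ty -> nat -> R) (t : Ty) (A X B : nat) : R :=
  B%:R * f t (A + X)%N.+1 - A%:R * f t (A + X)%N.

Section Dec.
Variables (R : realType) (n : nat) (Ty : finType) (c f : Ty -> nat -> R).
Variables (Res : finType) (G : @game R n Ty Res).

Definition cA (a a' : profile n Res) r := #|[set i | (r \in a i) && ~~ (r \in a' i)]|.
Definition cX (a a' : profile n Res) r := #|[set i | (r \in a i) && (r \in a' i)]|.
Definition cB (a a' : profile n Res) r := #|[set i | (r \in a' i) && ~~ (r \in a i)]|.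

Lemma load_AX a a' r : load a r = (cA a a' r + cX a a' r)%N.
Proof. have H := card_split (fun i => r \in a i) (fun i => r \in a' i); simpl in H.
by rewrite loadE H addnC. Qed.

Lemma load_XB a a' r : load a' r = (cX a a' r + cB a a' r)%N.
Proof.
have H := card_split (fun i => r \in a' i) (fun i => r \in a i); simpl in H.
rewrite loadE H; congr (_ + _)%N.
by apply: eq_card => i; rewrite !inE andbC.
Qed.

Lemma AXB_le a a' r : (cA a a' r + cX a a' r + cB a a' r <= n)%N.
Proof.
rewrite -load_AX loadE.
have -> : #|[set i | r \in a i]| = #|[set i | (r \in a i) || (r \in a' i)] :&: [set i | r \in a i]|.
  by apply: eq_card => i; rewrite !inE; case: (r \in a i); rewrite ?andbF.
rewrite /cB.
have -> : #|[set i | (r \in a' i) && ~~ (r \in a i)]| = #|[set i | (r \in a i) || (r \in a' i)] :\: [set i | r \in a i]|.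
  by apply: eq_card => i; rewrite !inE; case: (r \in a i); case: (r \in a' i); rewrite ?andbF.
by rewrite cardsID; have := max_card [set i | (r \in a i) || (r \in a' i)]; rewrite card_ord.
Qed.

Lemma load_upd (a : profile n Res) i (S : {set Res}) r : r \in S ->
  load (upd a i S) r = ((r \notin a i) + load a r)%N.
Proof.
move=> rS; rewrite !loadE.
case: (boolP (r \in a i)) => ri /=.
  by apply: eq_card => j; rewrite !inE /upd; case: eqP => // ->; rewrite ri rS.
have -> : [set j | r \in upd a i S j] = i |: [set j | r \in a j].
  by apply/setP => j; rewrite !inE /upd; case: eqP => [->|] //=; rewrite rS.
by rewrite cardsU1 inE ri.
Qed.

Notation gam := (gam0 f).

Lemma sum_dev_upd (a a' : profile n Res) :
  \sum_(i < n) loccost f G i (upd a i (a' i)) =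
  \sum_r gval G r * ((cX a a' r)%:R * f (gty G r) (load a r)
                    + (cB a a' r)%:R * f (gty G r) (load a r).+1).
Proof.
rewrite /loccost.
under eq_bigr => i _ do rewrite {1}/upd eqxx big_mkcond /=.
rewrite exchange_big /=; apply: eq_bigr => r _.
rewrite -big_mkcond /= (bigID (fun i => r \in a i)) /=.
rewrite mulrDr; congr (_ + _).
  rewrite (eq_bigr (fun=> gval G r * f (gty G r) (load a r))); last first.
    by move=> i /andP[ra' ra]; rewrite load_upd // ra.
  rewrite sum_cond_const -mulrnAr; congr (_ * _); rewrite mulr_natl; congr (_ *+ _).
  by apply: eq_card => i; rewrite !inE andbC.
rewrite (eq_bigr (fun=> gval G r * f (gty G r) (load a r).+1)); last first.
  by move=> i /andP[ra' ra]; rewrite load_upd // (negbTE ra).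
by rewrite sum_cond_const -mulrnAr mulr_natl.
Qed.

Lemma sum_loc (a a' : profile n Res) :
  \sum_(i < n) loccost f G i a =
  \sum_r gval G r * ((load a r)%:R * f (gty G r) (load a r)).
Proof.
rewrite /loccost.
under eq_bigr => i _ do rewrite big_mkcond /=.
rewrite exchange_big /=; apply: eq_bigr => r _.
by rewrite -big_mkcond /= sum_cond_const -mulrnAr mulr_natl loadE.
Qed.

Lemma dev_sum (a a' : profile n Res) :
  \sum_(i < n) loccost f G i (upd a i (a' i)) - \sum_(i < n) loccost f G i a =
  \sum_r gval G r * gam (gty G r) (cA a a' r) (cX a a' r) (cB a a' r).
Proof.
rewrite sum_dev_upd (sum_loc a a') -sumrB; apply: eq_bigr => r _.
rewrite /gam0 -(load_AX a a' r).
have HL : (load a r)%:R = (cA a a' r)%:R + (cX a a' r)%:R :> R.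
  by rewrite (load_AX a a' r) natrD.
rewrite HL.
set v := gval G r. set F := f (gty G r).
rewrite !mulrDl; lra.
Qed.
End Dec.

Lemma argmax_ex (R : realType) (I : finType) (P : pred I) (F : I -> R) i0 :
  P i0 -> exists i, P i /\ forall j, P j -> F j <= F i.
Proof.
move=> Pi0; case: (arg_maxP F Pi0) => i Pi Hi.
by exists i; split => // j Pj; exact: Hi.
Qed.

Section LP.
Variables (R : realType) (n : nat) (Ty : finType) (c f : Ty -> nat -> R).
Hypothesis n_gt0 : (0 < n)%N.
Hypothesis hc0 : forall t, c t 0%N = 0.
Hypothesis hcp : forall t x, (1 <= x <= n)%N -> 0 < c t x.
Hypothesis hfp : forall t x, (1 <= x <= n)%N -> 0 < f t x.

Lemma c_ge0 t x : (x <= n)%N -> 0 <= c t x.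
Proof.
case: x => [|x] hx; first by rewrite hc0.
by apply/ltW/hcp; rewrite hx.
Qed.

Lemma gam_neg t A : (1 <= A <= n)%N -> gam0 f t A 0 0 < 0.
Proof.
move=> hA; rewrite /gam0 addn0 mul0r sub0r oppr_lt0.
apply: mulr_gt0; last exact: hfp.
by rewrite ltr0n; case/andP: hA.
Qed.

Lemma gam_XB0 t A X B : (A + X + B <= n)%N -> c t (X + B) = 0 ->
  X = 0%N /\ B = 0%N /\ (A = 0%N \/ gam0 f t A X B < 0).
Proof.
move=> hn hc.
have hXB : (X + B = 0)%N.
  apply/eqP; apply: contraT => hne.
  have : 0 < c t (X + B) by apply: hcp; rewrite lt0n hne /=; apply: leq_trans hn; rewrite -addnA leq_addl.
  by rewrite hc ltxx.
move/eqP: hXB; rewrite addn_eq0 => /andP[/eqP hX /eqP hB]; subst X B.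
split => //; split => //.
case: A hn => [|A] hn; [by left | right].
by rewrite gam_neg // ?addn0 //; rewrite !addn0 in hn; rewrite hn.
Qed.


Lemma LP_main : (0 < #|Ty|)%N ->
  exists P nu (t1 t2 : Ty) (A1 X1 B1 A2 X2 B2 : nat) (th1 th2 : R),
  (0 < nu /\ 1 <= P) /\
   (forall t A X B, (A + X + B <= n)%N ->
      nu * gam0 f t A X B + c t (A + X)%N <= P * c t (X + B)%N) /\
   ((A1 + X1 + B1 <= n)%N /\ (A2 + X2 + B2 <= n)%N) /\
   (0 <= th1 /\ 0 <= th2 /\ th1 * gam0 f t1 A1 X1 B1 + th2 * gam0 f t2 A2 X2 B2 = 0) /\
   0 < th1 * c t1 (X1 + B1)%N + th2 * c t2 (X2 + B2)%N /\
   th1 * c t1 (A1 + X1)%N + th2 * c t2 (A2 + X2)%N =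
     P * (th1 * c t1 (X1 + B1)%N + th2 * c t2 (X2 + B2)%N).
Proof.
case/card_gt0P => t0 _.
pose K := (Ty * 'I_n.+1 * 'I_n.+1 * 'I_n.+1)%type.
pose kt (k : K) := k.1.1.1.
pose kA (k : K) := nat_of_ord k.1.1.2.
pose kX (k : K) := nat_of_ord k.1.2.
pose kB (k : K) := nat_of_ord k.2.
pose okk (k : K) := (kA k + kX k + kB k <= n)%N.
pose al (k : K) := c (kt k) (kA k + kX k)%N.
pose be (k : K) := c (kt k) (kX k + kB k)%N.
pose ga (k : K) := gam0 f (kt k) (kA k) (kX k) (kB k).
pose valid (p : K * K) := [&& okk p.1, okk p.2, 0 <= ga p.1, 0 < be p.1 & ga p.2 < 0].
pose D (p : K * K) := - ga p.2 * be p.1 + ga p.1 * be p.2.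
pose Nm (p : K * K) := - ga p.2 * al p.1 + ga p.1 * al p.2.
pose rr (p : K * K) := Nm p / D p.
have be_ge0 k : okk k -> 0 <= be k.
  by move=> hk; apply: c_ge0; apply: leq_trans hk; rewrite -addnA leq_addl.
have al_ge0 k : okk k -> 0 <= al k.
  by move=> hk; apply: c_ge0; apply: leq_trans hk; rewrite leq_addr.
have D_gt0 p : valid p -> 0 < D p.
  case/and5P => h1 h2 h3 h4 h5; rewrite /D.
  apply: ltr_pwDl; first by apply: mulr_gt0 => //; rewrite oppr_gt0.
  by apply: mulr_ge0 => //; apply: be_ge0.
have k1 : (1 < n.+1)%N by rewrite ltnS.
pose o0 : 'I_n.+1 := ord0.
pose o1 : 'I_n.+1 := Ordinal k1.
pose j0 : K := (t0, o0, o1, o0).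
pose k0 : K := (t0, o1, o0, o0).
have okj0 : okk j0 by rewrite /okk /=.
have okk0 : okk k0 by rewrite /okk /=.
have gak0 : ga k0 = - f t0 1%N by rewrite /ga /gam0 /= mul0r mul1r sub0r.
have f1 : 0 < f t0 1%N by apply: hfp; rewrite n_gt0.
have c1 : 0 < c t0 1%N by apply: hcp; rewrite n_gt0.
have gaj0 : ga j0 = 0 by rewrite /ga /gam0 /= !mul0r subr0.
have bej0 : be j0 = c t0 1%N by [].
have alj0 : al j0 = c t0 1%N by [].
have bek0 : be k0 = 0 by rewrite /be /= hc0.
have alk0 : al k0 = c t0 1%N by [].
have vp0 : valid (j0, k0).
  by rewrite /valid /= okj0 okk0 gaj0 lexx bej0 c1 gak0 oppr_lt0 f1.
have rr0 : rr (j0, k0) = 1.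
  rewrite /rr /Nm /D /= gaj0 gak0 bej0 alj0 !mul0r !addr0 opprK divff //.
  by apply: lt0r_neq0; apply: mulr_gt0.
have [pm [vpm Hpm]] := argmax_ex rr vp0.
set P := rr pm.
have P1 : 1 <= P by rewrite -rr0; apply: Hpm.
have V p : valid p -> Nm p <= P * D p.
  move=> vp; rewrite -ler_pdivrMr; last exact: D_gt0.
  exact: Hpm.
pose lk (k : K) := (al k - P * be k) / (- ga k).
pose Ng (k : K) := okk k && (ga k < 0).
have Ngk0 : Ng k0 by rewrite /Ng okk0 gak0 oppr_lt0 f1.
have [km [Ngkm Hkm]] := argmax_ex lk Ngk0.
set nu := lk km.
case/andP: Ngkm => okkm gakm.
have ngkm : 0 < - ga km by rewrite oppr_gt0.
have nu_gt0 : 0 < nu.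
  apply: lt_le_trans (Hkm _ Ngk0).
  by rewrite /lk bek0 alk0 mulr0 subr0 gak0 opprK divr_gt0.
have Enu : nu * (- ga km) = al km - P * be km.
  by rewrite /nu /lk divfK // lt0r_neq0.
have feas k : okk k -> nu * ga k + al k <= P * be k.
  move=> okk_k.
  have beXB : be k = 0 -> ga k < 0 \/ ga k = 0 /\ al k = 0.
    move=> hb; have [hX [hB [hA|hlt]]] := gam_XB0 okk_k hb; last by left.
    right; rewrite /ga /al hX hB hA /gam0 !mul0r subr0 hc0; split => //.
  have [glt|ggt|geq] := ltrgtP (ga k) 0.
  - have h : lk k <= nu by apply: Hkm; rewrite /Ng okk_k glt.
    move: h; rewrite [lk k]/lk ler_pdivrMr ?oppr_gt0 // mulrN => h; lra.
  - have bk : 0 < be k.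
      have := be_ge0 _ okk_k; rewrite le0r => /orP[/eqP hb|//].
      by case: (beXB hb) => [h|[h _]]; move: ggt; rewrite ?h ?ltxx // => /lt_trans/(_ h); rewrite ltxx.
    have vk : valid (k, km) by rewrite /valid /= okk_k okkm ltW // bk gakm.
    have := V _ vk; rewrite /Nm /D /= => HV.
    rewrite -(ler_pM2r ngkm).
    have E2 : nu * ga k * (- ga km) = ga k * (al km - P * be km) by rewrite -Enu; ring.
    have E3 : (nu * ga k + al k) * - ga km = nu * ga k * (- ga km) + al k * (- ga km) by ring.
    rewrite E3 E2.
    have E4 : P * be k * - ga km = P * (- ga km * be k) by ring.
    rewrite E4.
    have E5 : P * (- ga km * be k + ga k * be km) = P * (- ga km * be k) + ga k * (P * be km) by ring.
    rewrite E5 in HV.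
    have E6 : ga k * (al km - P * be km) + al k * - ga km = - ga km * al k + ga k * al km - ga k * (P * be km) by ring.
    rewrite E6; lra.
  - rewrite geq mulr0 add0r.
    have := be_ge0 _ okk_k; rewrite le0r => /orP[/eqP hb|bk].
      by case: (beXB hb) => [h|[_ ->]]; [move: h; rewrite geq ltxx | rewrite hb mulr0].
    have vk : valid (k, km) by rewrite /valid /= okk_k okkm geq lexx bk gakm.
    have := V _ vk; rewrite /Nm /D /= geq !mul0r !addr0 mulrCA ler_pM2l //.
have hD := D_gt0 _ vpm.
case/and5P: vpm => okj okk_k gj bj gk.
exists P, nu, (kt pm.1), (kt pm.2), (kA pm.1), (kX pm.1), (kB pm.1), (kA pm.2), (kX pm.2), (kB pm.2), (- ga pm.2), (ga pm.1).
split; first by split => //.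
split.
  move=> t A X B hn.
  have hA : (A < n.+1)%N by rewrite ltnS; apply: leq_trans hn; rewrite -addnA leq_addr.
  have hX : (X < n.+1)%N by rewrite ltnS; apply: leq_trans hn; rewrite -addnA addnC -addnA leq_addr.
  have hB : (B < n.+1)%N by rewrite ltnS; apply: leq_trans hn; rewrite leq_addl.
  exact: (feas (t, Ordinal hA, Ordinal hX, Ordinal hB) hn).
split; first by split.
split; first by split; [rewrite oppr_ge0 ltW | split => //; rewrite /ga; ring].
split; first exact: hD.
by rewrite /P /rr divfK // lt0r_neq0.
Qed.

End LP.
Section Bounds.
Variables (R : realType) (n : nat) (Ty : finType) (c f : Ty -> nat -> R).

Lemma smooth_all (lam mu : R) :
  (forall t A X B, (A + X + B <= n)%N ->
     gam0 f t A X B + c t (A + X)%N <= lam * c t (X + B)%N + mu * c t (A + X)%N) ->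
  forall (Res : finType) (G : @game R n Ty Res), valid_game G ->
  forall a a' : profile n Res,
    \sum_(i < n) loccost f G i (upd a i (a' i)) - \sum_(i < n) loccost f G i a
      + syscost c G a <= lam * syscost c G a' + mu * syscost c G a.
Proof.
move=> H Res G [hv _] a a'.
rewrite dev_sum /syscost !mulr_sumr -big_split -big_split /=.
apply: ler_sum => r _.
rewrite (load_AX a a' r) (load_XB a a' r).
have := H (gty G r) _ _ _ (AXB_le a a' r).
move=> /(ler_wpM2l (hv r)).
by rewrite !mulrDr !mulrA ![_ * gval G r]mulrC.
Qed.

Lemma NE_bound (lam mu : R) (Res : finType) (G : @game R n Ty Res) ne b :
  gpoa_feasible n c f lam mu -> valid_game G -> is_NE f G ne -> feasible G b ->
  (1 - mu) * syscost c G ne <= lam * syscost c G b.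
Proof.
move=> [_ [_ H]] hv [fne hne] fb.
have := H Res G hv ne b fne fb.
have : 0 <= \sum_(i < n) loccost f G i (upd ne i (b i)) - \sum_(i < n) loccost f G i ne.
  rewrite subr_ge0; apply: ler_sum => i _; exact: hne.
move=> h1 h2; rewrite mulrBl mul1r; lra.
Qed.

Lemma classPoA_le : (classPoA n c f <= classGPoA n c f)%E.
Proof.
apply: le_ereal_inf_tmp => _ [lam [mu [hf ->]]].
apply: ge_ereal_sup => _ [Res [G [hv [hpo ->]]]].
apply: ge_ereal_sup => _ [ne [op [hne [hop ->]]]].
rewrite lee_fin.
have hC := hpo op hop.
have [hl [hm _]] := hf.
have h := NE_bound hf hv hne (proj1 hop).
by rewrite ler_pdivrMr // mulrAC ler_pdivlMr ?subr_gt0 // mulrC.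
Qed.

End Bounds.

Lemma gpoa_from_LP (R : realType) n (Ty : finType) (c f : Ty -> nat -> R) (P nu : R) :
  0 < nu -> 1 <= P ->
  (forall t A X B, (A + X + B <= n)%N ->
      nu * gam0 f t A X B + c t (A + X)%N <= P * c t (X + B)%N) ->
  gpoa_feasible n c f (P / nu) (1 - nu^-1) /\ P / nu / (1 - (1 - nu^-1)) = P.
Proof.
move=> hnu hP H.
have iv : 0 < nu^-1 by rewrite invr_gt0.
split; last by rewrite opprB addrC subrK invrK divfK // lt0r_neq0.
split; first by rewrite divr_gt0 // (lt_le_trans ltr01).
split; first by rewrite ltrBlDr ltrDl.
move=> Res G hv a a' _ _; apply: smooth_all => // t A X B hn.
have := H t A X B hn => /(ler_wpM2l (ltW iv)).
rewrite mulrDr mulrA mulVf ?lt0r_neq0 // mul1r => h.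
rewrite mulrBl mul1r; lra.
Qed.

Lemma card_lt_ord n m : (m <= n)%N -> #|[set d : 'I_n | (d < m)%N]| = m.
Proof.
move=> hm.
have -> : [set d : 'I_n | (d < m)%N] = [set widen_ord hm x | x in 'I_m].
  apply/setP => d; rewrite !inE; apply/idP/imsetP => [dm|[x _ ->]] /=; last exact: ltn_ord.
  by exists (Ordinal dm) => //; apply: val_inj.
rewrite card_imset ?card_ord //.
by move=> x y /(congr1 val) /= /val_inj.
Qed.

Lemma card_int_ord n m1 m2 : (m1 <= m2)%N -> (m2 <= n)%N ->
  #|[set d : 'I_n | (m1 <= d)%N && (d < m2)%N]| = (m2 - m1)%N.
Proof.
move=> h12 h2.
have := card_split (fun d : 'I_n => (d < m2)%N) (fun d : 'I_n => (m1 <= d)%N); simpl.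
rewrite card_lt_ord //.
have -> : #|[set i : 'I_n | (i < m2)%N && ~~ (m1 <= i)%N]| = m1.
  have E : [set i : 'I_n | (i < m2)%N && ~~ (m1 <= i)%N] = [set d : 'I_n | (d < m1)%N].
    apply/setP => d; rewrite !inE -ltnNge.
    by case: (ltnP d m1) => h; [rewrite andbT (leq_trans h h12) | rewrite andbF].
  by rewrite E card_lt_ord // (leq_trans h12 h2).
move/(congr1 (subn^~ m1)); rewrite addnK => ->.
by apply: eq_card => d; rewrite !inE andbC.
Qed.

Section Cons.
Variables (R : realType) (m : nat) (Ty : finType) (c f : Ty -> nat -> R).
Local Notation N := m.+1.
Variables (t1 t2 : Ty) (A1 X1 B1 A2 X2 B2 : nat) (th1 th2 : R).
Hypothesis hn1 : (A1 + X1 + B1 <= N)%N.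
Hypothesis hn2 : (A2 + X2 + B2 <= N)%N.
Hypothesis hth1 : 0 <= th1.
Hypothesis hth2 : 0 <= th2.

Definition tyb (b : bool) := if b then t2 else t1.
Definition Ab (b : bool) := if b then A2 else A1.
Definition Xb (b : bool) := if b then X2 else X1.
Definition Bb (b : bool) := if b then B2 else B1.
Definition thb (b : bool) := if b then th2 else th1.

Lemma hnb b : (Ab b + Xb b + Bb b <= N)%N.
Proof. by case: b. Qed.

Lemma hAX1 : (A1 + X1 <= N)%N. Proof. exact: leq_trans (leq_addr B1 _) hn1. Qed.
Lemma hAX2 : (A2 + X2 <= N)%N. Proof. exact: leq_trans (leq_addr B2 _) hn2. Qed.

Definition Rs := (bool * 'I_N)%type.
Definition dof (i s : 'I_N) : nat := nat_of_ord (i - s)%R.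

Definition neS (i : 'I_N) : {set Rs} := [set r : Rs | (dof i r.2 < Ab r.1 + Xb r.1)%N].
Definition opS (i : 'I_N) : {set Rs} :=
  [set r : Rs | (Ab r.1 <= dof i r.2)%N && (dof i r.2 < Ab r.1 + Xb r.1 + Bb r.1)%N].

Definition Gc : @game R N Ty Rs :=
  Game (fun r : Rs => thb r.1) (fun r : Rs => tyb r.1) (fun i => [set neS i; opS i]).

Lemma inj_s (i : 'I_N) : injective (fun s : 'I_N => (i - s)%R).
Proof. by move=> x y /addrI /oppr_inj. Qed.

Lemma inj_i (s : 'I_N) : injective (fun i : 'I_N => (i - s)%R).
Proof. by move=> x y /addIr. Qed.

Lemma card_i (s : 'I_N) (P : pred nat) :
  #|[set i : 'I_N | P (dof i s)]| = #|[set d : 'I_N | P d]|.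
Proof.
rewrite -[in RHS](card_preimset _ (@inj_i s)); apply: eq_card => i.
by rewrite !inE.
Qed.

Lemma sum_s (i : 'I_N) (F : nat -> R) :
  \sum_(s : 'I_N) F (dof i s) = \sum_(d : 'I_N) F d.
Proof. by rewrite [RHS](reindex_inj (@inj_s i)). Qed.

Lemma sum_int (x : R) m1 m2 : (m1 <= m2)%N -> (m2 <= N)%N ->
  \sum_(d : 'I_N) (if (m1 <= d)%N && (d < m2)%N then x else 0) = x *+ (m2 - m1).
Proof.
move=> h1 h2; rewrite -big_mkcond /= sum_cond_const card_int_ord //.
Qed.

Lemma load_ne (r : Rs) : load neS r = (Ab r.1 + Xb r.1)%N.
Proof.
rewrite loadE; case: r => b s /=.
have -> : [set i | (b, s) \in neS i] = [set i | (dof i s < Ab b + Xb b)%N] by apply/setP => i; rewrite !inE.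
have H := card_i s (fun d => d < Ab b + Xb b)%N; cbv beta in H.
rewrite H card_lt_ord //.
by apply: leq_trans (hnb b); rewrite leq_addr.
Qed.

Lemma load_op (r : Rs) : load opS r = (Xb r.1 + Bb r.1)%N.
Proof.
rewrite loadE; case: r => b s /=.
have -> : [set i | (b, s) \in opS i] = [set i | (Ab b <= dof i s)%N && (dof i s < Ab b + Xb b + Bb b)%N] by apply/setP => i; rewrite !inE.
have H := card_i s (fun d => (Ab b <= d)%N && (d < Ab b + Xb b + Bb b)%N); cbv beta in H.
rewrite H.
rewrite card_int_ord ?hnb //; last by rewrite -addnA leq_addr.
by rewrite -addnA addKn.
Qed.

Lemma sum_Rs (F : Rs -> R) : \sum_(r : Rs) F r = \sum_(s : 'I_N) F (true, s) + \sum_(s : 'I_N) F (false, s).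
Proof.
have H := @pair_bigA R 0 +%R bool 'I_N (fun (b : bool) (s : 'I_N) => F (b, s)).
rewrite big_bool /= in H; rewrite H; apply: eq_bigr => [[b s]] _ //.
Qed.


Lemma sum_int0 (x : R) m2 : (m2 <= N)%N ->
  \sum_(d : 'I_N) (if (d < m2)%N then x else 0) = x *+ m2.
Proof. by move=> h2; rewrite -big_mkcond /= sum_cond_const card_lt_ord. Qed.

Lemma sum_s_int (i : 'I_N) (x : R) m1 m2 : (m1 <= m2)%N -> (m2 <= N)%N ->
  \sum_(s : 'I_N) (if (m1 <= dof i s)%N && (dof i s < m2)%N then x else 0) = x *+ (m2 - m1).
Proof.
move=> h1 h2.
have H := sum_s i (fun d => if (m1 <= d)%N && (d < m2)%N then x else 0); cbv beta in H.
by rewrite H sum_int.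
Qed.

Lemma sum_s_int0 (i : 'I_N) (x : R) m2 : (m2 <= N)%N ->
  \sum_(s : 'I_N) (if (dof i s < m2)%N then x else 0) = x *+ m2.
Proof.
move=> h2.
have H := sum_s i (fun d => if (d < m2)%N then x else 0); cbv beta in H.
by rewrite H sum_int0.
Qed.

Lemma split_if (th : R) (g : nat -> R) (d A X B : nat) :
  (if (A <= d)%N && (d < A + X + B)%N then th * g ((~~ (d < A + X)%N) + (A + X))%N else 0) =
  (if (A <= d)%N && (d < A + X)%N then th * g (A + X)%N else 0) +
  (if (A + X <= d)%N && (d < A + X + B)%N then th * g (A + X).+1 else 0).
Proof.
case: (ltnP d (A + X)) => h.
  have h2 : (d < A + X + B)%N by apply: leq_trans h (leq_addr _ _).
  by rewrite h2 /= andbT add0n addr0.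
have hA : (A <= d)%N by apply: leq_trans h; apply: leq_addr.
by rewrite hA andbF /= add1n add0r.
Qed.

Lemma cost_ne : syscost c Gc neS = N%:R * (th1 * c t1 (A1 + X1)%N + th2 * c t2 (A2 + X2)%N).
Proof.
rewrite /syscost sum_Rs /=.
under eq_bigr do rewrite load_ne /=.
under [X in _ + X]eq_bigr do rewrite load_ne /=.
rewrite !sumr_const !card_ord /= !mulr_natl addrC.
by rewrite mulrnDl.
Qed.

Lemma cost_op : syscost c Gc opS = N%:R * (th1 * c t1 (X1 + B1)%N + th2 * c t2 (X2 + B2)%N).
Proof.
rewrite /syscost sum_Rs /=.
under eq_bigr do rewrite load_op /=.
under [X in _ + X]eq_bigr do rewrite load_op /=.
rewrite !sumr_const !card_ord /= !mulr_natl addrC.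
by rewrite mulrnDl.
Qed.

Lemma J_ne (i : 'I_N) : loccost f Gc i neS =
  th2 * f t2 (A2 + X2)%N *+ (A2 + X2) + th1 * f t1 (A1 + X1)%N *+ (A1 + X1).
Proof.
rewrite /loccost big_mkcond sum_Rs /=.
under eq_bigr do rewrite load_ne inE /=.
under [X in _ + X]eq_bigr do rewrite load_ne inE /=.
by rewrite !sum_s_int0 // ?hAX1 ?hAX2.
Qed.

Lemma J_op (i : 'I_N) : loccost f Gc i (upd neS i (opS i)) =
  (th2 * f t2 (A2 + X2)%N *+ X2 + th2 * f t2 (A2 + X2)%N.+1 *+ B2)
  + (th1 * f t1 (A1 + X1)%N *+ X1 + th1 * f t1 (A1 + X1)%N.+1 *+ B1).
Proof.
rewrite /loccost (eq_bigl (fun r => r \in opS i)); last by move=> r; rewrite /upd eqxx.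
rewrite big_mkcond.
rewrite (eq_bigr (fun r : Rs => if r \in opS i then thb r.1 * f (tyb r.1) ((r \notin neS i) + (Ab r.1 + Xb r.1))%N else 0)); last first.
  move=> r _; case: ifP => // hr; rewrite load_upd // load_ne //.
rewrite sum_Rs /=.
under eq_bigr do rewrite !inE /= split_if.
under [X in _ + X]eq_bigr do rewrite !inE /= split_if.
rewrite !big_split /= !sum_s_int ?leq_addr ?hAX1 ?hAX2 ?hn1 ?hn2 //.
by rewrite !addKn.
Qed.

Lemma ne_NE : th1 * gam0 f t1 A1 X1 B1 + th2 * gam0 f t2 A2 X2 B2 = 0 -> is_NE f Gc neS.
Proof.
move=> hg; split; first by move=> i; rewrite /= set21.
move=> i ai /set2P [->|->].
  have -> : upd neS i (neS i) = neS by apply: funext => j; rewrite /upd; case: eqP => // ->.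
  exact: lexx.
rewrite J_op J_ne; move: hg; rewrite /gam0 !mulr_natl !mulrBr !mulrnAr !mulrnDr => hg.
lra.
Qed.

Definition pick (g : {ffun 'I_N -> bool}) : profile N Rs :=
  fun i => if g i then opS i else neS i.

Lemma opt_exists : exists op, is_opt c Gc op.
Proof.
have [gm [_ Hgm]] := @argmax_ex R _ predT (fun g => - syscost c Gc (pick g)) [ffun => false] isT.
exists (pick gm); split.
  by move=> i; rewrite /pick; case: (gm i); rewrite /= ?set21 ?set22.
move=> b fb.
have -> : b = pick [ffun i => b i == opS i].
  apply: funext => i; rewrite /pick ffunE; case: eqP => // hne.
  by have := fb i; rewrite /= => /set2P [//|h].
by have := Hgm [ffun i => b i == opS i] isT; rewrite lerN2.
Qed.

End Cons.

Unset Implicit Arguments.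
Set Strict Implicit.

Theorem theorem4 (R : realType) (n : nat) (Ty : finType) (c f : Ty -> nat -> R) :
  (0 < n)%N -> (0 < #|Ty|)%N ->
  (forall t, c t 0%N = 0) ->
  (forall t x, (1 <= x <= n)%N -> 0 < c t x) ->
  (forall t x, (1 <= x <= n)%N -> 0 < f t x) ->
  classPoA n c f = classGPoA n c f /\
  exists (Res : finType) (G : @game R n Ty Res),
    valid_game G /\ (#|Res| <= 2 * n)%N /\ pos_opt c G /\
    gamePoA c f G = classGPoA n c f.
Proof.
move=> n_gt0 hTy hc0 hcp hfp.
have [P [nu [t1 [t2 [A1 [X1 [B1 [A2 [X2 [B2 [th1 [th2 H]]]]]]]]]]]] :=
  LP_main n_gt0 hc0 hcp hfp hTy.
case: H => [[nu0 P1] [Hfeas [[hn1 hn2] [[h1 [h2 hg]] [hD hN]]]]].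
have [hgf hval] := gpoa_from_LP nu0 P1 Hfeas.
have le1 : (classGPoA n c f <= P%:E)%E.
  by apply: ereal_inf_lbound; exists (P / nu), (1 - nu^-1); split => //; rewrite hval.
have le4 := classPoA_le n c f.
case: n n_gt0 hcp hfp Hfeas hn1 hn2 hgf le1 le4 => [//|m] _ hcp hfp Hfeas hn1 hn2 hgf le1 le4.
pose G := Gc m t1 t2 A1 X1 B1 A2 X2 B2 th1 th2.
have vG : valid_game G.
  split; first by move=> [[] s].
  by move=> i; apply/set0Pn; exists (neS A1 X1 A2 X2 i); rewrite set21.
have hne : is_NE f G (neS A1 X1 A2 X2) by exact: ne_NE.
have Cne : syscost c G (neS A1 X1 A2 X2) = P * syscost c G (opS A1 X1 B1 A2 X2 B2).
  by rewrite cost_ne // cost_op // hN mulrCA.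
have CopS : 0 < syscost c G (opS A1 X1 B1 A2 X2 B2).
  by rewrite cost_op // mulr_gt0 // ltr0n.
have CnePos : 0 < syscost c G (neS A1 X1 A2 X2).
  by rewrite Cne mulr_gt0 // (lt_le_trans ltr01).
have [hl [hm _]] := hgf.
have hpos : pos_opt c G.
  move=> a [fa _]; have := NE_bound hgf vG hne fa.
  rewrite ltNge; apply: contraTN => ha.
  rewrite -ltNge; apply: le_lt_trans (_ : 0 < _); last by apply: mulr_gt0 => //; rewrite subr_gt0.
  by apply: mulr_ge0_le0 => //; apply: ltW.
have [op hop] := opt_exists m c t1 t2 A1 X1 B1 A2 X2 B2 th1 th2.
have Cop := hpos op hop.
have hle : syscost c G op <= syscost c G (opS A1 X1 B1 A2 X2 B2).
  by apply: (proj2 hop) => i; rewrite /= set22.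
have le2 : (P%:E <= gamePoA c f G)%E.
  apply: le_trans (ereal_sup_ubound _); last first.
    by exists (neS A1 X1 A2 X2), op; split => //; split.
  rewrite lee_fin ler_pdivlMr // Cne.
  by apply: ler_wpM2l => //; apply: le_trans P1.
have le3 : (gamePoA c f G <= classPoA m.+1 c f)%E.
  by apply: ereal_sup_ubound; exists (Rs m), G; split => //; split.
split.
  apply/eqP; rewrite eq_le le4 /=.
  by apply: le_trans le1 (le_trans le2 le3).
exists (Rs m), G; split => //; split.
  by rewrite card_prod card_bool card_ord.
split => //.
apply/eqP; rewrite eq_le (le_trans le3 le4) /=.
exact: le_trans le1 le2.
Qed.
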